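(* Let $K$ be any finite index subgroup of $F_2$, and suppose that $K$ contains an element of odd length. Then there is an $N$ such that for every $n\geq N$, $K$ contains an element of length $n$.
   Context: $F_2$ is the free group on $a,b$, $\Xi=\{a,b,a^{-1},b^{-1}\}$, and an element has length $n$ if its reduced word $x_1\cdots x_n$ ($x_i\in\Xi$, $x_{i+1}\neq x_i^{-1}$) has $n$ letters. *)

(* Defs.v *)
From mathcomp Require Import all_boot.
Set Implicit Arguments. Unset Strict Implicit. Unset Printing Implicit Defensive.

Inductive letter := La | Lb | LaI | LbI.

Definition linv (x : letter) : letter :=
  match x with La => LaI | Lb => LbI | LaI => La | LbI => Lb end.

Definition is_inv (x y : letter) : bool :=
  match x, y with
  | La, LaI | LaI, La | Lb, LbI | LbI, Lb => true
  | _, _ => false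
  end.

Definition word := seq letter.

Fixpoint reduced (w : word) : bool :=
  match w with
  | x :: ((y :: _) as w') => ~~ is_inv x y && reduced w'
  | _ => true
  end.

Definition push (x : letter) (w : word) : word :=
  match w with
  | y :: w' => if is_inv x y then w' else x :: w
  | [::] => [:: x]
  end.

Definition reduce (s : word) : word := foldr push [::] s.

Definition F2 (w : word) : Prop := reduced w.
Definition wmul (u v : word) : word := reduce (u ++ v).
Definition winv (u : word) : word := rev (map linv u).

Definition wlength (w : word) : nat := size w.

Definition is_subgroup (K : word -> Prop) : Prop :=
  [/\ (forall w, K w -> F2 w),
      K [::],
      (forall u v, K u -> K v -> K (wmul u v)) &
      (forall u, K u -> K (winv u))].

(* K has finite index: finitely many left cosets g K cover F_2. *)
Definition finite_index (K : word -> Prop) : Prop :=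
  exists reps : seq word,
    all reduced reps /\
    forall w, F2 w ->
      exists2 i, i < size reps & K (wmul (winv (nth [::] reps i)) w).

(* Main.v *)
Require Import Defs.
From mathcomp Require Import all_boot.
From mathcomp Require Import zify.
From Stdlib Require Import Classical Lia.
Set Implicit Arguments. Unset Strict Implicit. Unset Printing Implicit Defensive.

Lemma linvK x : linv (linv x) = x. Proof. by case: x. Qed.
Lemma is_inv_linv x : is_inv x (linv x). Proof. by case: x. Qed.
Lemma is_invP x y : is_inv x y -> y = linv x. Proof. by case: x; case: y. Qed.

Lemma red_tl x s : reduced (x :: s) -> reduced s.
Proof. by case: s => //= y s /andP[]. Qed.

Lemma push_red x w : reduced w -> reduced (push x w).
Proof.
case: w => [|y w] //= H; case: ifP => h; first exact: red_tl H.
by rewrite /= h.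
Qed.

Lemma foldr_red w s : reduced w -> reduced (foldr push w s).
Proof. by move=> H; elim: s => //= x s IH; apply: push_red. Qed.

Lemma reduce_red s : reduced (reduce s).
Proof. exact: foldr_red. Qed.

Lemma push_cancel x w : reduced w -> push x (push (linv x) w) = w.
Proof.
case: w => [|y w] /=; first by rewrite is_inv_linv.
case: ifP => h H.
  have E : y = x by rewrite (is_invP h) linvK.
  subst y.
  move: H; case: w => [|z w] //= /andP[h1 _].
  by rewrite (negbTE h1).
by rewrite /= is_inv_linv.
Qed.

Definition eqv (s t : word) := forall w, reduced w -> foldr push w s = foldr push w t.

Lemma eqv_refl s : eqv s s. Proof. by []. Qed.
Lemma eqv_sym s t : eqv s t -> eqv t s. Proof. by move=> H w hw; rewrite H. Qed.
Lemma eqv_trans s t u : eqv s t -> eqv t u -> eqv s u.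
Proof. by move=> H1 H2 w hw; rewrite H1 // H2. Qed.
Lemma eqv_cat s1 t1 s2 t2 : eqv s1 t1 -> eqv s2 t2 -> eqv (s1 ++ s2) (t1 ++ t2).
Proof.
move=> H1 H2 w hw; rewrite !foldr_cat H2 // H1 //; exact: foldr_red.
Qed.
Lemma eqv_reduce_eq s t : eqv s t -> reduce s = reduce t.
Proof. by move=> H; apply: H. Qed.

Lemma foldr_push w x r : reduced w -> reduced r ->
  foldr push w (push x r) = push x (foldr push w r).
Proof.
move=> hw; case: r => [|y r] //= hr; case: ifP => // h.
by rewrite (is_invP h) push_cancel //; apply: foldr_red.
Qed.

Lemma reduce_eqv s : eqv (reduce s) s.
Proof.
elim: s => [|x s IH] //= w hw.
by rewrite foldr_push // ?reduce_red // IH.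
Qed.

Lemma winv_cat s t : winv (s ++ t) = winv t ++ winv s.
Proof. by rewrite /winv map_cat rev_cat. Qed.
Lemma winvK s : winv (winv s) = s.
Proof. by rewrite /winv map_rev revK -map_comp (eq_map linvK) map_id. Qed.
Lemma winv_cons x s : winv (x :: s) = winv s ++ [:: linv x].
Proof. by rewrite -cat1s winv_cat. Qed.
Lemma winv_nseq k c : winv (nseq k c) = nseq k (linv c).
Proof. by rewrite /winv map_nseq rev_nseq. Qed.

Lemma cancel_eqv s : eqv (s ++ winv s) [::].
Proof.
elim: s => [|x s IH] // w hw.
rewrite winv_cons /= catA foldr_cat /= IH ?push_red //.
by rewrite /= push_cancel.
Qed.

Lemma cancel_eqv' s : eqv (winv s ++ s) [::].
Proof. by have := cancel_eqv (winv s); rewrite winvK. Qed.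

Lemma winv_reduce_eqv s : eqv (winv s) (winv (reduce s)).
Proof.
elim: s => [|x s IH] //=.
rewrite winv_cons.
apply: eqv_trans (eqv_cat IH (eqv_refl _)) _.
have : reduced (reduce s) by apply: reduce_red.
case: (reduce s) => [|y r] //= hr.
case: ifP => h; last by rewrite [X in eqv _ X]winv_cons.
rewrite (is_invP h) !winv_cons -catA.
rewrite -[X in eqv _ X](cats0 (winv r)).
apply: eqv_cat => // w hw /=; rewrite linvK.
by rewrite push_cancel.
Qed.

Lemma reduce_id s : reduced s -> reduce s = s.
Proof.
elim: s => [|x s IH] //= H.
rewrite IH ?(red_tl H) //.
by move: H; case: s {IH} => [|y s] //= /andP[h _]; rewrite (negbTE h).
Qed.

Lemma wmul_cat u v : reduced (u ++ v) -> wmul u v = u ++ v.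
Proof. exact: reduce_id. Qed.

Lemma wmul_eqv u v t : eqv (u ++ v) t -> reduced t -> wmul u v = t.
Proof. by move=> H ht; rewrite /wmul (eqv_reduce_eq H) reduce_id. Qed.

Lemma coset_lemma (r x y : word) :
  eqv (winv (wmul (winv r) x) ++ wmul (winv r) y) (winv x ++ y).
Proof.
rewrite /wmul.
apply: eqv_trans (eqv_cat (eqv_sym (winv_reduce_eqv _)) (reduce_eqv _)) _.
rewrite winv_cat winvK -catA.
apply: (eqv_cat (eqv_refl _)).
rewrite catA -{2}(cat0s y); apply: eqv_cat => //; exact: cancel_eqv.
Qed.

Lemma php n (P : nat -> nat -> Prop) :
  (forall t, t <= n -> exists2 i, i < n & P t i) ->
  exists t t' i, [/\ t < t', t' <= n, P t i & P t' i].
Proof.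
elim: n P => [|n IH] P H.
  by have [i] := H 0 (leqnn 0).
have [i0 lt0 P0] := H n.+1 (leqnn _).
case: (classic (exists2 t, t <= n & P t i0)) => [[t le1 Pt]|Hn].
  by exists t, n.+1, i0; split.
pose P' t i := P t (if i < i0 then i else i.+1).
have [|t [t' [i [h1 h2 h3 h4]]]] := IH P'.
  move=> t le1.
  have [i lti Pi] := H t (leq_trans le1 (leqnSn _)).
  have ne : i != i0 by apply/eqP => E; subst i; apply: Hn; exists t.
  case: (ltnP i i0) => hi.
    exists i; first lia.
    by rewrite /P' hi.
  exists i.-1.
    by move: lti hi ne; case: i {Pi} => [|i] //=; lia.
  rewrite /P'.
  have hi' : i0 < i by lia.
  move: hi' Pi; case: i {lti hi ne} => [|i] //= hi'.
  by have -> : (i < i0) = false by lia.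
by exists t, t', (if i < i0 then i else i.+1); split => //; lia.
Qed.

Lemma eqv_mid a y b : eqv (a ++ (y ++ winv y) ++ b) (a ++ b).
Proof. apply: eqv_cat => //; rewrite -{2}(cat0s b); apply: eqv_cat => //; exact: cancel_eqv. Qed.
Lemma eqv_mid' a y b : eqv (a ++ (winv y ++ y) ++ b) (a ++ b).
Proof. apply: eqv_cat => //; rewrite -{2}(cat0s b); apply: eqv_cat => //; exact: cancel_eqv'. Qed.


Lemma K_cat (K : word -> Prop) (HK : is_subgroup K) u v : K u -> K v -> reduced (u ++ v) -> K (u ++ v).
Proof. case: HK => _ _ Hm _ ku kv r; rewrite -wmul_cat //; exact: Hm. Qed.

Lemma K_red (K : word -> Prop) (HK : is_subgroup K) u : K u -> reduced u.
Proof. by case: HK => H _ _ _ /H. Qed.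

Lemma conj_pow (K : word -> Prop) (HK : is_subgroup K) c y e :
  (forall k, 0 < k -> reduced (winv y ++ nseq k c ++ y)) -> 0 < e ->
  K (winv y ++ nseq e c ++ y) -> forall k, K (winv y ++ nseq (e * k.+1) c ++ y).
Proof.
move=> Hr e0 Ke; elim=> [|k IH]; first by rewrite muln1.
case: HK => _ _ Hm _.
have -> : winv y ++ nseq (e * k.+2) c ++ y =
  wmul (winv y ++ nseq (e * k.+1) c ++ y) (winv y ++ nseq e c ++ y).
  symmetry; apply: wmul_eqv; last by apply: Hr; rewrite muln_gt0 e0.
  rewrite (mulnS e k.+1) addnC nseqD -!catA.
  have := eqv_mid (winv y ++ nseq (e * k.+1) c) y (nseq e c ++ y).
  by rewrite -!catA.
exact: Hm.
Qed.

Lemma conjK (K : word -> Prop) (HK : is_subgroup K) reps c y :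
  (forall w, F2 w -> exists2 i, i < size reps & K (wmul (winv (nth [::] reps i)) w)) ->
  (forall k, reduced (nseq k c ++ y)) ->
  (forall k, 0 < k -> reduced (winv y ++ nseq k c ++ y)) ->
  K (winv y ++ nseq ((size reps)`!.*2) c ++ y).
Proof.
move=> Hfi Hr1 Hr2.
have [t [t' [i [h1 h2 h3 h4]]]] :=
  php (P := fun t i => K (wmul (winv (nth [::] reps i)) (nseq t c ++ y)))
      (fun t _ => Hfi _ (Hr1 t)).
set e := t' - t.
have e0 : 0 < e by rewrite /e; lia.
have Ke : K (winv y ++ nseq e c ++ y).
  case: HK => _ _ Hm Hi.
  have := Hm _ _ (Hi _ h3) h4.
  rewrite {1}/wmul (eqv_reduce_eq (coset_lemma _ _ _)).
  suff E : eqv (winv (nseq t c ++ y) ++ nseq t' c ++ y) (winv y ++ nseq e c ++ y).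
    by rewrite (eqv_reduce_eq E) reduce_id //; apply: Hr2.
  have -> : t' = t + e by rewrite /e; lia.
  rewrite winv_cat nseqD.
  have := eqv_mid' (winv y) (nseq t c) (nseq e c ++ y).
  by rewrite -!catA.
have de : e %| (size reps)`!.*2.
  rewrite -muln2; apply: dvdn_mulr; apply: dvdn_fact; rewrite e0 /=; rewrite /e; lia.
have : 0 < (size reps)`!.*2 %/ e.
  by rewrite divn_gt0 // (dvdn_leq _ de) // -muln2 muln_gt0 fact_gt0.
case E : (_ %/ e) => [|k] // _.
have := conj_pow HK Hr2 e0 Ke k.
by rewrite -E mulnC divnK.
Qed.

Definition jn (s t : word) := [|| nilp s, nilp t | ~~ is_inv (last La s) (head La t)].

Lemma reduced_cat s t : reduced (s ++ t) = [&& reduced s, reduced t & jn s t].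
Proof.
rewrite /jn; elim: s => [|x s IH] /=; first by rewrite andbT.
case: s IH => [|y s] IH /=.
  by case: t {IH} => [|z t] //=; rewrite ?andbT // andbC.
rewrite /= in IH; rewrite IH.
by case: (is_inv x y).
Qed.

Lemma head_cat' (y : letter) (s t : word) : head y (s ++ t) = head (head y t) s.
Proof. by case: s. Qed.

Lemma red_nseq k (c : letter) : reduced (nseq k c).
Proof. by elim: k => [|[|k] IH] //=; case: c IH. Qed.

Lemma last_nseqS (y c : letter) k : last y (nseq k.+1 c) = c.
Proof. by elim: k. Qed.
Lemma head_nseqS (y c : letter) k : head y (nseq k.+1 c) = c.
Proof. by []. Qed.
Lemma nilp_nseqS k (c : letter) : nilp (nseq k.+1 c) = false.
Proof. by []. Qed.
Lemma nilp1 (x : letter) : nilp [:: x] = false. Proof. by []. Qed.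
Lemma last1 (y x : letter) : last y [:: x] = x. Proof. by []. Qed.
Lemma head1 (y x : letter) : head y [:: x] = x. Proof. by []. Qed.
Lemma red1 (x : letter) : reduced [:: x]. Proof. by []. Qed.

Ltac redsolve :=
  rewrite ?reduced_cat /jn ?cat_nilp ?last_cat ?head_cat' ?nilp_nseqS ?nilp1
     ?last_nseqS ?head_nseqS ?last1 ?head1 ?red_nseq ?red1 /=.

Lemma test c l k : ~~ is_inv (linv l) c -> ~~ is_inv c l ->
  reduced ([:: linv l] ++ nseq k.+1 c ++ [:: l]).
Proof. move=> h1 h2. redsolve. rewrite h1 h2. done. Qed.

Definition letters := [:: La; Lb; LaI; LbI].
Definition cond f g c l1 l2 := [&& ~~ is_inv (linv l1) c, ~~ is_inv c l1, ~~ is_inv l1 c,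
  ~~ is_inv (linv c) (linv l1), ~~ is_inv (linv l2) c, ~~ is_inv c l2, ~~ is_inv l2 c,
  ~~ is_inv (linv c) (linv l2), ~~ is_inv l1 f, ~~ is_inv g (linv l2),
  ~~ is_inv l2 (linv l1), ~~ is_inv l1 (linv c), ~~ is_inv c (linv l2) & ~~ is_inv l1 (linv l2)].

Lemma has_ex (T : Type) (p : pred T) s : has p s -> exists x, p x.
Proof. by elim: s => //= x s IH /orP[h|/IH]; [exists x|]. Qed.

Lemma cond_ex f g : exists c l1 l2, cond f g c l1 l2.
Proof.
have : has (fun c => has (fun l1 => has (fun l2 => cond f g c l1 l2) letters) letters) letters.
  by case: f; case: g.
move/has_ex=> [c /has_ex [l1 /has_ex [l2 h]]]; by exists c, l1, l2.
Qed.

Lemma size_flatten_nseq k (X : word) : size (flatten (nseq k X)) = k * size X.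
Proof. by elim: k => //= k IH; rewrite size_cat IH mulSn. Qed.

Lemma winv1 (x : letter) : winv [:: x] = [:: linv x]. Proof. by []. Qed.

Lemma red_suffix (s t : word) : reduced (s ++ t) -> reduced t.
Proof. by rewrite reduced_cat => /and3P[]. Qed.

Lemma arX a b : 1 + (b.+1 + 1) +
  (a + (1 + (b.+1 + 1) + (1 + (b.+1 + 1) + (1 + (b.+1 + 1))))) =
  (b.+1 + 2) * 4 + a.
Proof. lia. Qed.
Lemma arY sw h F M' : 1 + h.*2 = sw -> F.*2 = M'.+1 ->
  1 + (M'.+1 + 1) +
  ((h + F + 1).+1 +
   (1 + (M'.+1 + (1 + (h + F + 1).+1))) +
   (1 + (M'.+1 + 1))) =
  ((M'.+1 + 2) * 4 + sw).+1.
Proof. lia. Qed.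
Lemma ar0 a b : 0 < (b.+1 + 2)*4 + a. Proof. lia. Qed.
Lemma arq A q r n : n = q * A + r -> r < A -> A * A <= n -> r <= q.
Proof. nia. Qed.
Lemma arfin A q r n : n = q * A + r -> r <= q -> (q - r) * A + r * A.+1 = n.
Proof. nia. Qed.

Theorem lemma5p6 (K : word -> Prop) :
  is_subgroup K -> finite_index K ->
  (exists w, K w /\ odd (wlength w)) ->
  exists N : nat, forall n : nat, N <= n -> exists w, K w /\ wlength w = n.
Proof.
move=> HK [reps [_ Hfi]] [w [Kw Lodd]].
have Rw : reduced w := K_red HK Kw.
rewrite /wlength in Lodd.
have [f [w' Ew]] : exists f w', w = f :: w' by case: (w) Lodd => [|f w'] //; exists f, w'.
pose g := last f w'.
have hwh : forall y, head y w = f by rewrite Ew.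
have hwl : forall y, last y w = g by rewrite Ew.
have hwn : nilp w = false by rewrite Ew.
have [c [l1 [l2 hc]]] := cond_ex f g.
move: hc; rewrite /cond => /andP[h1 /andP[h2 /andP[h3 /andP[h4 /andP[h5 /andP[h6 /andP[h7 /andP[h8 /andP[h9 /andP[h10 /andP[h11 /andP[h12 /andP[h13 h14]]]]]]]]]]]]].
have [M' EM] : exists M', (size reps)`!.*2 = M'.+1.
  by exists ((size reps)`!.*2).-1; rewrite prednK // double_gt0 fact_gt0.
have hL := odd_double_half (size w). rewrite Lodd in hL.
pose J := (size w)./2 + (size reps)`! + 1.
pose T l := [:: linv l] ++ nseq M'.+1 c ++ [:: l].
pose z := [:: l1] ++ nseq J.+1 c.
have Ewz : winv z = nseq J.+1 (linv c) ++ [:: linv l1] by rewrite /z winv_cat winv_nseq.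
have KT1 : K (T l1).
  have := conjK HK (y := [:: l1]) (c := c) Hfi.
  rewrite EM; apply.
    by case=> [|k]; redsolve; rewrite ?hwh ?hwl ?hwn ?Rw ?h1 ?h2 ?h3 ?h4 ?h5 ?h6 ?h7 ?h8 ?h9 ?h10 ?h11 ?h12 ?h13 ?h14 //.
  by case=> [|k] // _; rewrite winv1; redsolve; rewrite ?hwh ?hwl ?hwn ?Rw ?h1 ?h2 ?h3 ?h4 ?h5 ?h6 ?h7 ?h8 ?h9 ?h10 ?h11 ?h12 ?h13 ?h14 //.
have KT2 : K (T l2).
  have := conjK HK (y := [:: l2]) (c := c) Hfi.
  rewrite EM; apply.
    by case=> [|k]; redsolve; rewrite ?hwh ?hwl ?hwn ?Rw ?h1 ?h2 ?h3 ?h4 ?h5 ?h6 ?h7 ?h8 ?h9 ?h10 ?h11 ?h12 ?h13 ?h14 //.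
  by case=> [|k] // _; rewrite winv1; redsolve; rewrite ?hwh ?hwl ?hwn ?Rw ?h1 ?h2 ?h3 ?h4 ?h5 ?h6 ?h7 ?h8 ?h9 ?h10 ?h11 ?h12 ?h13 ?h14 //.
have KTz : K (nseq J.+1 (linv c) ++ [:: linv l1] ++ nseq M'.+1 c ++ z).
  have := conjK HK (y := z) (c := c) Hfi.
  rewrite EM Ewz -catA; apply.
    by case=> [|k]; rewrite /z; redsolve; rewrite ?hwh ?hwl ?hwn ?Rw ?h1 ?h2 ?h3 ?h4 ?h5 ?h6 ?h7 ?h8 ?h9 ?h10 ?h11 ?h12 ?h13 ?h14 //.
  by case=> [|k] // _; rewrite /z; redsolve; rewrite ?hwh ?hwl ?hwn ?Rw ?h1 ?h2 ?h3 ?h4 ?h5 ?h6 ?h7 ?h8 ?h9 ?h10 ?h11 ?h12 ?h13 ?h14 //.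
pose X := T l1 ++ w ++ T l2 ++ T l1 ++ T l2.
pose Y := T l1 ++ (nseq J.+1 (linv c) ++ [:: linv l1] ++ nseq M'.+1 c ++ z) ++ T l2.
have RX : reduced X.
 rewrite /X /T; redsolve; rewrite ?hwh ?hwl ?hwn ?Rw ?h1 ?h2 ?h3 ?h4 ?h5 ?h6 ?h7 ?h8 ?h9 ?h10 ?h11 ?h12 ?h13 ?h14 //.
have RY : reduced Y by rewrite /Y /T /z; redsolve; rewrite ?hwh ?hwl ?hwn ?Rw ?h1 ?h2 ?h3 ?h4 ?h5 ?h6 ?h7 ?h8 ?h9 ?h10 ?h11 ?h12 ?h13 ?h14 //.
have KX : K X.
  have R1 := red_suffix RX; have R2 := red_suffix R1; have R3 := red_suffix R2.
  by do 4! apply: (K_cat HK) => //.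
have KY : K Y.
  have R1 := red_suffix RY.
  by do 2! apply: (K_cat HK) => //.
pose Gd u := K u /\ reduced u /\ (u = [::] \/ exists u', u = linv l1 :: u' /\ last (linv l1) u' = l2).
have Gcat : forall u v, Gd u -> Gd v -> Gd (u ++ v).
  move=> u v [Ku [Ru Hu]] [Kv [Rv Hv]].
  case: Hu => [->|[u' [Eu hu]]] //.
  case: Hv => [->|[v' [Ev hv]]]; first by rewrite cats0; split => //; split => //; right; exists u'.
  have R : reduced (u ++ v).
    by rewrite reduced_cat Ru Rv /jn Eu Ev /= hu.
  split; first exact: (K_cat HK).
  split => //; right; exists (u' ++ v); split; first by rewrite Eu.
  by rewrite last_cat hu Ev.
have GX : Gd X.
  split => //; split => //; right.
  exists (nseq M'.+1 c ++ [:: l1] ++ w ++ T l2 ++ T l1 ++ T l2); split; first by rewrite /X /T -!catA.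
  by rewrite /T !last_cat.
have GY : Gd Y.
  split => //; split => //; right.
  exists (nseq M'.+1 c ++ [:: l1] ++ (nseq J.+1 (linv c) ++ [:: linv l1] ++ nseq M'.+1 c ++ z) ++ T l2); split; first by rewrite /Y /T -!catA.
  by rewrite /T !last_cat.
have G0 : Gd [::] by split; [by case: HK | split => //; left].
have Gpow : forall k u, Gd u -> Gd (flatten (nseq k u)).
  by move=> k u Gu; elim: k => //= k IH; apply: Gcat.
have sX : size X = (M'.+1 + 2) * 4 + size w.
  by rewrite /X /T !size_cat !size_nseq /= arX.
have sY : size Y = (size X).+1.
  by rewrite sX /Y /T /z !size_cat !size_nseq /= /J (arY hL EM).
exists (size X * size X) => n hn.
set A := size X in hn sY.
have A0 : 0 < A by rewrite /A sX ar0.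
have hq := divn_eq n A.
have hr := ltn_pmod n A0.
set q := n %/ A in hq.
set r := n %% A in hq hr.
have qr : r <= q by apply: arq hq hr hn.
exists (flatten (nseq (q - r) X) ++ flatten (nseq r Y)); split.
  by case: (Gcat _ _ (Gpow (q - r) _ GX) (Gpow r _ GY)).
rewrite /wlength size_cat !size_flatten_nseq sY -/A.
exact: (arfin hq qr).
Qed.
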